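(* Consider an instance of the problem $P_m \mid r_j \le d \mid \sum w_j F_j$ as defined in the context (finite job set $J$, processing times $p_j>0$, weights $w_j>0$, deadline $d\ge 0$, $m\ge 1$ identical machines). In every optimal solution $(\pi_1,\dots,\pi_m)$, for each machine $i$, the jobs of $J_{\mathrm{late}}(\pi_i)$ (the jobs on machine $i$ starting at or after $d$) appear in $\pi_i$ in nondecreasing order of the ratio $p_j/w_j$ (i.e. they are sorted according to the WSPT rule).
   Context: An instance consists of a finite set $J$ of jobs, each job $j$ having a processing time $p_j>0$ and a weight $w_j>0$, a common deadline $d\ge 0$, and a number $m\ge 1$ of identical machines. A single-machine schedule is a finite sequence $\pi$ of distinct jobs processed consecutively without idle time starting at time $0$: the start time of job $j$ in $\pi$ is $S_j=\sum_{k \text{ before } j \text{ in } \pi} p_k$ and its completion time is $C_j=S_j+p_j$. Let $J_{\mathrm{pri}}(\pi)=\{j\in\pi : S_j<d\}$ and $J_{\mathrm{late}}(\pi)=\{j\in\pi: S_j\ge d\}$. The cost of $\pi$ is $$\phi(\pi)=\sum_{j\in J_{\mathrm{pri}}(\pi)} w_j p_j+\sum_{j\in J_{\mathrm{late}}(\pi)} w_j\,(C_j-d).$$ (This is the total weighted flowtime $\sum_j w_j(C_j-r_j)$ when each release date $r_j$ is a decision variable constrained by $r_j\le d$ and chosen optimally as $r_j=\min(S_j,d)$.) A solution is a tuple $(\pi_1,\dots,\pi_m)$ of single-machine schedules such that every job of $J$ appears in exactly one $\pi_i$; its cost is $\sum_{i=1}^m\phi(\pi_i)$, and a solution is optimal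 if its cost is minimal among all solutions. This problem is denoted $P_m \mid r_j \le d \mid \sum w_j F_j$. *)

(* Defs.v *)
From HB Require Import structures.
From mathcomp Require Import all_boot all_order all_algebra.
Set Implicit Arguments. Unset Strict Implicit. Unset Printing Implicit Defensive.
Import Order.TTheory GRing.Theory Num.Theory.
Local Open Scope ring_scope.

Section Sched.
Variables (R : realFieldType) (J : finType).
Variables (p w : J -> R) (d : R).

Definition start (s : seq J) (j : J) : R :=
  \sum_(k <- take (index j s) s) p k.

Fixpoint phi_from (t : R) (s : seq J) : R :=
  match s with
  | [::] => 0
  | j :: s' =>
      (if t < d then w j * p j else w j * (t + p j - d)) + phi_from (t + p j) s'
  end.

Definition phi (s : seq J) : R := phi_from 0 s.

Definition late_jobs (s : seq J) : seq J := [seq j <- s | d <= start s j].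

Definition is_solution (m : nat) (pi : 'I_m -> seq J) : Prop :=
  (forall i, uniq (pi i)) /\ (forall j : J, exists! i : 'I_m, j \in pi i).

Definition total_cost (m : nat) (pi : 'I_m -> seq J) : R := \sum_(i < m) phi (pi i).

Definition is_optimal (m : nat) (pi : 'I_m -> seq J) : Prop :=
  is_solution pi /\
  forall sigma : 'I_m -> seq J, is_solution sigma -> total_cost pi <= total_cost sigma.

End Sched.

(* Main.v *)
Require Import Defs.
From HB Require Import structures.
From mathcomp Require Import all_boot all_order all_algebra.
From mathcomp Require Import ring lra.
Import Order.TTheory GRing.Theory Num.Theory.
Local Open Scope ring_scope.

Section Aux.
Variables (R : realFieldType) (J : finType) (p w : J -> R) (d : R).
Hypothesis hp : forall j, 0 < p j.
Hypothesis hw : forall j, 0 < w j.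

Definition late_t (t : R) (s : seq J) := [seq j <- s | d <= t + start p s j].

Lemma start_cons j s x : start p (j :: s) x = if j == x then 0 else p j + start p s x.
Proof. by rewrite /start /=; case: eqP => _; rewrite ?big_nil // big_cons. Qed.

Lemma start_ge0 s x : 0 <= start p s x.
Proof. by apply: sumr_ge0 => k _; exact: ltW. Qed.

Lemma late_t_cons t j s : uniq (j :: s) ->
  late_t t (j :: s) = if d <= t then j :: late_t (t + p j) s else late_t (t + p j) s.
Proof.
move=> /= /andP [jn _].
rewrite /late_t /= start_cons eqxx addr0.
have -> : [seq x <- s | d <= t + start p (j :: s) x] = [seq x <- s | d <= t + p j + start p s x].
  apply: eq_in_filter => x xs; rewrite start_cons.
  have -> : (j == x) = false by apply/negbTE; apply: contraNneq jn => ->.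
  by rewrite addrA.
by [].
Qed.

Definition LO t s := forall s1 a b s2, s = s1 ++ a :: b :: s2 ->
  phi_from p w d t s <= phi_from p w d t (s1 ++ b :: a :: s2).

Lemma main t s : uniq s -> LO t s -> sorted (fun a b => p a / w a <= p b / w b) (late_t t s).
Proof.
elim: s t => [|j s IH] t; first by [].
move=> us lo.
have us' : uniq s by case/andP: us.
have lo' : LO (t + p j) s.
  move=> s1 a b s2 e; have := lo (j :: s1) a b s2; rewrite e /= => /(_ erefl).
  by rewrite lerD2l.
rewrite late_t_cons //.
case: ifP => dt; last exact: IH.
have -> : late_t (t + p j) s = s.
  rewrite /late_t; apply/all_filterP/allP => x _.
  have := start_ge0 s x; have := hp j; lra.
have ss : sorted (fun a b => p a / w a <= p b / w b) s.
  have := IH (t + p j) us' lo'.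
  have -> : late_t (t + p j) s = s.
    rewrite /late_t; apply/all_filterP/allP => x _.
    have := start_ge0 s x; have := hp j; lra.
  by [].
clear IH; case: s us us' lo lo' ss => [|b s2] //= us us' lo lo' ss.
rewrite ss andbT.
have := lo [::] j b s2 erefl; rewrite /=.
rewrite !ltNge dt.
have -> : d <= t + p j by have := hp j; lra.
have -> : d <= t + p b by have := hp b; lra.
rewrite /= (addrAC t (p b) (p j)) => H.
have wj := hw j; have wb := hw b.
rewrite ler_pdivrMr // mulrAC ler_pdivlMr //.
nra.
Qed.

End Aux.

Theorem lemma1 (R : realFieldType) (J : finType) (p w : J -> R) (d : R) (m : nat)
  (hp : forall j, 0 < p j) (hw : forall j, 0 < w j) (hd : 0 <= d) (hm : (0 < m)%N)
  (pi : 'I_m -> seq J) :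
  is_optimal p w d pi ->
  forall i : 'I_m,
    sorted (fun a b => p a / w a <= p b / w b) (late_jobs p d (pi i)).
Proof.
move=> [[uq ex] opt] i.
have -> : late_jobs p d (pi i) = @late_t _ _ p d 0 (pi i).
  by apply: eq_filter => x; rewrite add0r.
apply: (@main _ _ p w d hp hw) => //.
move=> s1 a b s2 e.
pose s' := s1 ++ b :: a :: s2.
have pe : perm_eq (pi i) s'.
  rewrite e perm_cat2l.
  by rewrite -(cat1s a) -(cat1s b) perm_catCA.
pose sigma := fun k : 'I_m => if k == i then s' else pi k.
have sol : is_solution sigma.
  have mem : forall k x, (x \in sigma k) = (x \in pi k).
    by move=> k x; rewrite /sigma; have [->|_] := eqVneq k i; rewrite ?(perm_mem pe).
  split.
    by move=> k; rewrite /sigma; case: (k == i); rewrite -?(perm_uniq pe).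
  move=> x; have [k [h1 h2]] := ex x; exists k; split; first by rewrite mem.
  by move=> k' h; apply: h2; rewrite -mem.
have E : \sum_(k < m | k != i) phi p w d (sigma k) = \sum_(k < m | k != i) phi p w d (pi k).
  by apply: eq_bigr => k /negbTE H; rewrite /sigma H.
have := opt sigma sol.
rewrite /total_cost (bigD1 i) //= [X in _ <= X](bigD1 i) //= E /sigma eqxx.
by rewrite lerD2r.
Qed.
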